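(* Let $D$ be a tangle diagram and fix an $\mathrm{SL}_2(\mathbb{C})$-coloring $i\mapsto g_i$ of $D$. Then the set of shadow colorings of $(D,g)$ is nonempty and is in bijection with $\mathbb{C}^2\setminus\{0\}$.
   Context: Tangle diagrams: a tangle diagram $D$ is an oriented tangle diagram in the square $[0,1]^2$, viewed as a 4-valent graph with crossings. Segments are the edges of the graph; a strand is cut at every crossing, whether over or under. Regions are the connected components of the complement of the graph in the square. Above and below: for a segment $i$, $i^{\uparrow}$ is the region on the left of $i$ with respect to its orientation and $i^{\downarrow}$ the region on its right. Crossing labels: rotate a crossing so both strands point right. The incoming segments are $1$ (upper left) and $2$ (lower left). The outgoing segments are $1'$ (lower right, continuing $1$) and $2'$ (upper right, continuing $2$). The crossing is positive if strand $1\to1'$ is over, negative if strand $2\to2'$ is over. $\mathrm{SL}_2(\mathbb{C})$-coloring: an assignment $i\mapsto g_i\in\mathrm{SL}_2(\mathbb{C})$ to segments such that: - at positive crossings, $g_{1'}=g_1$ and $g_{2'}=g_1^{-1}g_2g_1$; - at negative crossings, $g_{2'}=g_2$ and $g_{1'}=g_2g_1g_2^{-1}$. Shadow coloring of $(D,g)$: an assignment $j\mapsto u_j$ of nonzero column vectors in $\mathbb{C}^2$ to the regions such that $u_{i^{\downarrow}}=g_iu_{i^{\uparrow}}$ for every segment $i$. *)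

(* Defs.v *)
(* Tangle diagrams are encoded combinatorially in Morse
   position: a diagram is a bottom slice of oriented endpoints followed by a
   sequence of elementary events (crossing, cup = local minimum,
   cap = local maximum), read from bottom to top. *)
From HB Require Import structures.
From mathcomp Require Import all_boot all_order all_algebra.
From mathcomp Require Import reals complex.
Set Implicit Arguments. Unset Strict Implicit. Unset Printing Implicit Defensive.
Import Order.TTheory GRing.Theory Num.Theory.

(* Orientation of a strand point on a horizontal level line:
   true = pointing up, false = pointing down. *)

Inductive step : Type :=
  | Cross of nat & bool  (* Cross k overA : the strands at positions k, k+1
                            cross; overA = true iff the strand going from
                            position k (below) to position k+1 (above) is
                            the over-strand *)
  | Cup of nat & bool    (* Cup k o : a local minimum creating two new points
                            at positions k, k+1 with orientations o, ~~o *)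
  | Cap of nat.          (* Cap k : a local maximum joining positions k, k+1 *)

Definition apply_step (st : step) (s : seq bool) : seq bool :=
  match st with
  | Cross k _ => take k s ++ [:: nth false s k.+1; nth false s k] ++ drop k.+2 s
  | Cup k o => take k s ++ [:: o; ~~ o] ++ drop k s
  | Cap k => take k s ++ drop k.+2 s
  end.

Definition step_valid (st : step) (s : seq bool) : bool :=
  match st with
  | Cross k _ => k.+1 < size s
  | Cup k _ => k <= size s
  | Cap k => (k.+1 < size s) && (nth false s k != nth false s k.+1)
  end.

Record diagram : Type := Diagram { bot : seq bool; steps : seq step }.

Definition height (D : diagram) : nat := size (steps D).
Definition stepn (D : diagram) (h : nat) : step := nth (Cap 0) (steps D) h.

(* the level line at height h (0 = bottom boundary, height D = top) *)
Definition slice (D : diagram) (h : nat) : seq bool :=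
  foldl (fun s st => apply_step st s) (bot D) (take h (steps D)).

Definition wf_diagram (D : diagram) : Prop :=
  forall h, h < height D -> step_valid (stepn D h) (slice D h).

(* Strand points (h, p): the p-th point of the level line h.  Each lies on a
   segment; segments are the classes of the identification seg_step below. *)
Definition pt_ok (D : diagram) (x : nat * nat) : bool :=
  (x.1 <= height D) && (x.2 < size (slice D x.1)).
Definition pt (D : diagram) := {x : nat * nat | pt_ok D x}.

(* Gaps (h, j): the j-th interval of the level line h (gap j lies between
   points j-1 and j).  Each lies in a region; regions are the classes of
   the identification region_step below. *)
Definition gap_ok (D : diagram) (x : nat * nat) : bool :=
  (x.1 <= height D) && (x.2 <= size (slice D x.1)).
Definition gap (D : diagram) := {x : nat * nat | gap_ok D x}.

(* where point p below an event continues above it (None: cut/ended) *)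
Definition pt_cont (st : step) (p : nat) : option nat :=
  match st with
  | Cross k _ => if (p == k) || (p == k.+1) then None else Some p
  | Cup k _ => Some (if p < k then p else p.+2)
  | Cap k => if p < k then Some p else if p <= k.+1 then None else Some (p - 2)
  end.

(* the gaps above an event belonging to the same region as gap j below *)
Definition gap_cont (st : step) (j : nat) : seq nat :=
  match st with
  | Cross k _ => if j == k.+1 then [::] else [:: j]
  | Cup k _ => if j < k then [:: j] else if j == k then [:: k; k.+2]
               else [:: j.+2]
  | Cap k => if j < k then [:: j] else if j == k then [:: k]
             else if j == k.+1 then [::] else if j == k.+2 then [:: k]
             else [:: j - 2]
  end.

(* elementary identifications of strand points lying on the same segment
   (segments are cut at every crossing, over or under) *)
Definition seg_step (D : diagram) (x y : nat * nat) : Prop :=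
  (exists h p q, [/\ h < height D, pt_cont (stepn D h) p = Some q,
                     x = (h, p) & y = (h.+1, q)])
  \/ (exists h k o, [/\ h < height D, stepn D h = Cup k o,
                       x = (h.+1, k) & y = (h.+1, k.+1)])
  \/ (exists h k, [/\ h < height D, stepn D h = Cap k,
                     x = (h, k) & y = (h, k.+1)]).

Definition region_step (D : diagram) (x y : nat * nat) : Prop :=
  exists h j q, [/\ h < height D, q \in gap_cont (stepn D h) j,
                   x = (h, j) & y = (h.+1, q)].

Definition orient (D : diagram) (x : nat * nat) : bool :=
  nth false (slice D x.1) x.2.

(* i^up = region on the left of the segment, i^down = region on its right *)
Definition gap_up (D : diagram) (x : nat * nat) : nat * nat :=
  (x.1, if orient D x then x.2 else x.2.+1).
Definition gap_down (D : diagram) (x : nat * nat) : nat * nat :=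
  (x.1, if orient D x then x.2.+1 else x.2).

(* Strand A runs between
   (h,k) and (h+1,k+1), strand B between (h,k+1) and (h+1,k).  After rotating
   so both strands point right, strand 1 (upper left -> lower right) is A iff
   the two strands have the same vertical orientation.  Returns
   (segment 1, segment 2, segment 1', segment 2', positivity). *)
Definition cross_labels (D : diagram) (h k : nat) (overA : bool) :
    (nat * nat) * (nat * nat) * (nat * nat) * (nat * nat) * bool :=
  let a := orient D (h, k) in
  let b := orient D (h, k.+1) in
  let inA := if a then (h, k) else (h.+1, k.+1) in
  let outA := if a then (h.+1, k.+1) else (h, k) in
  let inB := if b then (h, k.+1) else (h.+1, k) in
  let outB := if b then (h.+1, k) else (h, k.+1) in
  if a == b then (inA, inB, outA, outB, overA)
  else (inB, inA, outB, outA, ~~ overA).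

Section Colorings.
Variable C : fieldType.
Local Open Scope ring_scope.

Definition SL2 : {pred 'M[C]_2} := [pred M | \det M == 1].

Definition is_SL2_coloring (D : diagram) (g : pt D -> 'M[C]_2) : Prop :=
  [/\ forall x : pt D, g x \in SL2,
      forall x y : pt D, seg_step D (val x) (val y) -> g x = g y &
      forall h k overA, (h < height D)%N -> stepn D h = Cross k overA ->
        forall x1 x2 x1' x2' : pt D,
        let: (i1, i2, i1', i2', pos) := cross_labels D h k overA in
        val x1 = i1 -> val x2 = i2 -> val x1' = i1' -> val x2' = i2' ->
        if pos then g x1' = g x1 /\ g x2' = invmx (g x1) *m g x2 *m g x1
        else g x2' = g x2 /\ g x1' = g x2 *m g x1 *m invmx (g x2)].

Definition is_shadow (D : diagram) (g : pt D -> 'M[C]_2)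
    (u : gap D -> 'cV[C]_2) : Prop :=
  [/\ forall r : gap D, u r != 0,
      forall r s : gap D, region_step D (val r) (val s) -> u r = u s &
      forall (x : pt D) (r s : gap D),
        val r = gap_up D (val x) -> val s = gap_down D (val x) ->
        u s = g x *m u r].

End Colorings.

(* Main.v *)
Require Import Defs.
From HB Require Import structures.
From mathcomp Require Import all_boot all_order all_algebra.
From mathcomp Require Import reals complex zify.
From Stdlib Require Import ProofIrrelevance FunctionalExtensionality.
Set Implicit Arguments. Unset Strict Implicit. Unset Printing Implicit Defensive.
Import Order.TTheory GRing.Theory Num.Theory.
Local Open Scope ring_scope.

Definition gg (C : fieldType) (D : diagram) (g : pt D -> 'M[C]_2) (x : nat * nat) : 'M[C]_2 :=
  match @insub _ (pt_ok D) (pt D) x with Some y => g y | None => 1 end.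

Lemma ggE (C : fieldType) D (g : pt D -> 'M[C]_2) (x : pt D) : gg g (val x) = g x.
Proof. by rewrite /gg valK. Qed.

Lemma invE (C : fieldType) (A : 'M[C]_2) : invmx A = A^-1.
Proof. by []. Qed.

Lemma gg_unit (C : fieldType) D (g : pt D -> 'M[C]_2) : (forall x, g x \in @SL2 C) ->
  forall x, gg g x \is a GRing.unit.
Proof.
move=> H x; rewrite /gg; case: insubP => [y _ _|_]; last exact: unitr1.
have := H y; rewrite inE => /eqP d.
by rewrite -[_ \is a _]/(g y \in unitmx) unitmxE d unitr1.
Qed.

Lemma slice_succ D h : (h < height D)%N ->
  slice D h.+1 = apply_step (stepn D h) (slice D h).
Proof.
move=> Hh; rewrite /slice (take_nth (Cap 0)) // foldl_rcons //.
Qed.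
Definition Mt (C : fieldType) D (g : pt D -> 'M[C]_2) (x : nat * nat) : 'M[C]_2 :=
  if orient D x then gg g x else (gg g x)^-1.

Fixpoint Pm (C : fieldType) (f : nat -> 'M[C]_2) (j : nat) : 'M[C]_2 :=
  if j is j'.+1 then f j' * Pm f j' else 1.

Definition P (C : fieldType) D (g : pt D -> 'M[C]_2) (h j : nat) : 'M[C]_2 :=
  Pm (fun p => Mt g (h, p)) j.

Lemma eq_Pm (C : fieldType) (f f' : nat -> 'M[C]_2) j :
  (forall p, (p < j)%N -> f p = f' p) -> Pm f j = Pm f' j.
Proof.
elim: j => //= j IH H; rewrite H // IH // => p Hp; apply: H; exact: ltnW.
Qed.

Lemma Pm_add (C : fieldType) (f : nat -> 'M[C]_2) m j :
  Pm f (m + j) = Pm (fun p => f (p + j)%N) m * Pm f j.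
Proof. by elim: m => [|m IH] /=; rewrite ?mul1r // IH mulrA. Qed.

Lemma Pm_unit (C : fieldType) (f : nat -> 'M[C]_2) j :
  (forall p, f p \is a GRing.unit) -> Pm f j \is a GRing.unit.
Proof. by move=> H; elim: j => [|j IH] /=; rewrite ?unitr1 // unitrMl ?IH ?H. Qed.

Lemma Mt_unit (C : fieldType) D (g : pt D -> 'M[C]_2) :
  (forall x, g x \in @SL2 C) -> forall x, Mt g x \is a GRing.unit.
Proof. by move=> H x; rewrite /Mt; case: ifP; rewrite ?unitrV gg_unit. Qed.

Lemma gg_seg (C : fieldType) D (g : pt D -> 'M[C]_2) :
  is_SL2_coloring g -> forall x y, pt_ok D x -> pt_ok D y -> seg_step D x y ->
  gg g x = gg g y.
Proof.
case=> _ H2 _ x y Hx Hy Hs.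
have := H2 (Sub x Hx) (Sub y Hy); rewrite !SubK => /(_ Hs).
by rewrite -(ggE g (Sub x Hx)) -(ggE g (Sub y Hy)) !SubK.
Qed.

Lemma Mt_cont (C : fieldType) D (g : pt D -> 'M[C]_2) :
  is_SL2_coloring g -> forall h p q, (h < height D)%N ->
  pt_cont (stepn D h) p = Some q ->
  (p < size (slice D h))%N -> (q < size (slice D h.+1))%N ->
  nth false (slice D h.+1) q = nth false (slice D h) p ->
  Mt g (h.+1, q) = Mt g (h, p).
Proof.
move=> Hc h p q Hh Hpc Hp Hq Ho.
rewrite /Mt /orient /= Ho (@gg_seg _ _ g Hc (h,p) (h.+1,q)) //.
- by rewrite /pt_ok /= Hp (ltnW Hh).
- by rewrite /pt_ok /= Hq Hh.
- by left; exists h, p, q.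
Qed.

Lemma Mt_pair (C : fieldType) D (g : pt D -> 'M[C]_2) :
  (forall x, g x \in @SL2 C) -> forall x y,
  orient D x != orient D y -> gg g x = gg g y -> Mt g y * Mt g x = 1.
Proof.
move=> Hu x y; rewrite /Mt; case: (orient D x); case: (orient D y) => //= _ ->.
  by rewrite mulVr ?gg_unit.
by rewrite mulrV ?gg_unit.
Qed.
Lemma nth_ins (s : seq bool) k m a b p : (k <= size s)%N ->
  nth false (take k s ++ [:: a; b] ++ drop m s) p =
  if (p < k)%N then nth false s p else if p == k then a
  else if p == k.+1 then b else nth false s (p - k - 2 + m).
Proof.
move=> Hk; rewrite nth_cat size_takel //; case: ltnP => Hp.
  by rewrite nth_take.
case: eqP => [->|Hpk]; first by rewrite subnn.
case: eqP => [->|Hpk1]; first by rewrite subSnn.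
have E : (p - k = (p - k - 2).+2)%N by lia.
by rewrite {1}E /= nth_drop addnC.
Qed.

Lemma size_ins (s : seq bool) k m a b : (k <= size s)%N -> (m <= size s)%N ->
  size (take k s ++ [:: a; b] ++ drop m s) = (k + 2 + (size s - m))%N.
Proof. by move=> Hk Hm; rewrite !size_cat size_takel // size_drop /= addnA. Qed.

Lemma wf_slice D h : wf_diagram D -> (h < height D)%N ->
  step_valid (stepn D h) (slice D h).
Proof. by move=> H; apply: H. Qed.

Lemma region_cup (C : fieldType) D (g : pt D -> 'M[C]_2) :
  is_SL2_coloring g -> wf_diagram D -> forall h k o j q, (h < height D)%N ->
  stepn D h = Cup k o -> (j <= size (slice D h))%N ->
  q \in gap_cont (Cup k o) j -> P g h j = P g h.+1 q.
Proof.
move=> Hc Hwf h k o j q Hh Hst Hj.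
have Hu := Hc; case: Hu => Hu _ _.
have := wf_slice Hwf Hh; rewrite Hst /= => Hk.
have Hs' := slice_succ Hh; rewrite Hst /= in Hs'.
have Hsz : size (slice D h.+1) = (size (slice D h)).+2.
  by rewrite Hs' size_ins // ?leqnn; lia.
have HA : forall p, (p < k)%N -> Mt g (h.+1, p) = Mt g (h, p).
  move=> p Hp; apply: (Mt_cont Hc) => //.
  - by rewrite Hst /= Hp.
  - by apply: leq_trans Hp Hk.
  - by rewrite Hsz; lia.
  - by rewrite Hs' nth_ins // Hp.
have HB : forall p, (k <= p)%N -> (p < size (slice D h))%N ->
    Mt g (h.+1, p.+2) = Mt g (h, p).
  move=> p Hp Hp'; apply: (Mt_cont Hc) => //.
  - by rewrite Hst /= ltnNge Hp.
  - by rewrite Hsz.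
  - rewrite Hs' nth_ins //; have -> : (p.+2 < k)%N = false by lia.
    have -> : (p.+2 == k) = false by lia.
    have -> : (p.+2 == k.+1) = false by lia.
    by congr nth; lia.
have HC : Mt g (h.+1, k.+1) * Mt g (h.+1, k) = 1.
  apply: (Mt_pair Hu).
    rewrite /orient /= Hs' !nth_ins // ltnn eqxx.
    have -> : (k.+1 < k)%N = false by lia.
    have -> : (k.+1 == k) = false by lia.
    by rewrite eqxx; case: (o).
  apply: (gg_seg Hc); rewrite /pt_ok /= ?Hh ?Hsz //; try lia.
  by right; left; exists h, k, o.
have Hbase : P g h.+1 k = P g h k by apply: eq_Pm => p Hp; apply: HA.
have Hbase2 : P g h.+1 k.+2 = P g h k by rewrite /P /= mulrA HC mul1r; exact: Hbase.
rewrite /=; case: (ltngtP j k) => Hjk.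
- rewrite inE => /eqP ->; apply: eq_Pm => p Hp; rewrite HA //; lia.
- rewrite inE => /eqP ->.
  have [m Em] : exists m, j = (m + k)%N by exists (j - k)%N; lia.
  subst j; rewrite -!addnS /P.
  rewrite !Pm_add -/(P g h k) -/(P g h.+1 k.+2) Hbase2; congr (_ * _).
  apply: eq_Pm => p Hp; rewrite !addnS HB //; lia.
- subst j; rewrite !inE => /orP [] /eqP ->; by rewrite ?Hbase ?Hbase2.
Qed.
Lemma nth_del (s : seq bool) k m p : (k <= size s)%N ->
  nth false (take k s ++ drop m s) p =
  if (p < k)%N then nth false s p else nth false s (p - k + m).
Proof.
move=> Hk; rewrite nth_cat size_takel //; case: ltnP => Hp.
  by rewrite nth_take.
by rewrite nth_drop addnC.
Qed.

Lemma region_cap (C : fieldType) D (g : pt D -> 'M[C]_2) :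
  is_SL2_coloring g -> wf_diagram D -> forall h k j q, (h < height D)%N ->
  stepn D h = Cap k -> (j <= size (slice D h))%N ->
  q \in gap_cont (Cap k) j -> P g h j = P g h.+1 q.
Proof.
move=> Hc Hwf h k j q Hh Hst Hj.
have Hu := Hc; case: Hu => Hu _ _.
have := wf_slice Hwf Hh; rewrite Hst /= => /andP [Hk Hneq].
have Hs' := slice_succ Hh; rewrite Hst /= in Hs'.
have Hsz : size (slice D h.+1) = (size (slice D h) - 2)%N.
  by rewrite Hs' size_cat size_takel ?size_drop; lia.
have HA : forall p, (p < k)%N -> Mt g (h.+1, p) = Mt g (h, p).
  move=> p Hp; apply: (Mt_cont Hc) => //.
  - by rewrite Hst /= Hp.
  - by lia.
  - by rewrite Hsz; lia.
  - by rewrite Hs' nth_del ?Hp //; lia.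
have HB : forall p, (k.+2 <= p)%N -> (p < size (slice D h))%N ->
    Mt g (h.+1, (p - 2)%N) = Mt g (h, p).
  move=> p Hp Hp'; apply: (Mt_cont Hc) => //.
  - rewrite Hst /=; have -> : (p < k)%N = false by lia.
    by have -> : (p <= k.+1)%N = false by lia.
  - by rewrite Hsz; lia.
  - rewrite Hs' nth_del; last by lia.
    have -> : (p - 2 < k)%N = false by lia.
    by congr nth; lia.
have HC : Mt g (h, k.+1) * Mt g (h, k) = 1.
  apply: (Mt_pair Hu) => //.
  apply: (gg_seg Hc); rewrite /pt_ok /= ?(ltnW Hh) //; try lia.
  by right; right; exists h, k.
have Hbase : P g h.+1 k = P g h k by apply: eq_Pm => p Hp; apply: HA.
have Hbase2 : P g h k.+2 = P g h k by rewrite /P /= mulrA HC mul1r.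
rewrite /=; case: (ltngtP j k) => Hjk.
- rewrite inE => /eqP ->; apply: eq_Pm => p Hp; rewrite HA //; lia.
- case: (ltngtP j k.+2) => Hjk2.
  + have -> : j == k.+1 by lia.
    by [].
  + have -> : (j == k.+1) = false by lia.
    rewrite inE => /eqP ->.
    have [m Em] : exists m, j = (m + k.+2)%N by exists (j - k.+2)%N; lia.
    subst j; rewrite (_ : (m + k.+2 - 2 = m + k)%N); last by lia.
    rewrite /P !Pm_add -/(P g h k) -/(P g h.+1 k) -/(P g h k.+2) Hbase Hbase2.
    congr (_ * _); apply: eq_Pm => p Hp.
    rewrite -HB; [by rewrite (_ : (p + k.+2 - 2 = p + k)%N) //; lia | lia | lia].
  + subst j; have -> : (k.+2 == k.+1) = false by lia.
    by rewrite inE => /eqP ->; rewrite Hbase2 Hbase.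
- by subst j; rewrite inE => /eqP ->; rewrite Hbase.
Qed.
Lemma inv3 (R : unitRingType) (x y z : R) :
  x \is a GRing.unit -> y \is a GRing.unit -> z \is a GRing.unit ->
  (x * y * z)^-1 = z^-1 * y^-1 * x^-1.
Proof. by move=> ux uy uz; rewrite !invrM ?unitrMl // mulrA. Qed.

Lemma cross_pair (C : fieldType) D (g : pt D -> 'M[C]_2) :
  is_SL2_coloring g -> wf_diagram D -> forall h k overA, (h < height D)%N ->
  stepn D h = Cross k overA ->
  Mt g (h.+1, k.+1) * Mt g (h.+1, k) = Mt g (h, k.+1) * Mt g (h, k).
Proof.
move=> Hc Hwf h k overA Hh Hst.
have Hu := Hc; case: Hu => Hu _ H3.
have U := gg_unit Hu.
have := wf_slice Hwf Hh; rewrite Hst /= => Hk.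
have Hs' := slice_succ Hh; rewrite Hst /= in Hs'.
have Hsz : size (slice D h.+1) = size (slice D h).
  by rewrite Hs' size_ins ?size_drop; lia.
have HA0 : pt_ok D (h, k) by rewrite /pt_ok /= (ltnW Hh); lia.
have HB0 : pt_ok D (h, k.+1) by rewrite /pt_ok /= (ltnW Hh); lia.
have HB1 : pt_ok D (h.+1, k) by rewrite /pt_ok /= Hh Hsz; lia.
have HA1 : pt_ok D (h.+1, k.+1) by rewrite /pt_ok /= Hh Hsz; lia.
pose pA0 : pt D := Sub (h, k) HA0.
pose pB0 : pt D := Sub (h, k.+1) HB0.
pose pB1 : pt D := Sub (h.+1, k) HB1.
pose pA1 : pt D := Sub (h.+1, k.+1) HA1.
have EA0 : g pA0 = gg g (h, k) by rewrite -ggE SubK.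
have EB0 : g pB0 = gg g (h, k.+1) by rewrite -ggE SubK.
have EA1 : g pA1 = gg g (h.+1, k.+1) by rewrite -ggE SubK.
have EB1 : g pB1 = gg g (h.+1, k) by rewrite -ggE SubK.
have OB1 : orient D (h.+1, k) = orient D (h, k.+1).
  by rewrite /orient /= Hs' nth_ins ?ltnn ?eqxx //; lia.
have OA1 : orient D (h.+1, k.+1) = orient D (h, k).
  rewrite /orient /= Hs' nth_ins; last by lia.
  have -> : (k.+1 < k)%N = false by lia.
  have -> : (k.+1 == k) = false by lia.
  by rewrite eqxx.
have H := H3 h k overA Hh Hst.
rewrite /Mt OA1 OB1.
case Ea : (orient D (h, k)); case Eb : (orient D (h, k.+1)).
- have := H pA0 pB0 pA1 pB1; rewrite /cross_labels Ea Eb /=.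
  move=> /(_ erefl erefl erefl erefl); rewrite EA0 EB0 EA1 EB1 !invE ?mulmxE.
  case: (overA) => [[-> ->]|[-> ->]].
    by rewrite mulrA mulVKr ?U.
  by rewrite mulrVK ?U.
- have := H pB1 pA0 pB0 pA1; rewrite /cross_labels Ea Eb /=.
  move=> /(_ erefl erefl erefl erefl); rewrite EA0 EB0 EA1 EB1 !invE ?mulmxE.
  case: (overA) => [[-> ->]|[-> ->]].
    by rewrite inv3 ?unitrV ?U // invrK ?mulrA mulrVK ?U.
  by rewrite mulrK ?U.
- have := H pB0 pA1 pB1 pA0; rewrite /cross_labels Ea Eb /=.
  move=> /(_ erefl erefl erefl erefl); rewrite EA0 EB0 EA1 EB1 !invE ?mulmxE.
  case: (overA) => [[-> ->]|[-> ->]].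
    by rewrite ?mulrA mulVr ?U // mul1r.
  by rewrite inv3 ?unitrV ?U // invrK ?mulrA mulrV ?U // mul1r.
- have := H pA1 pB1 pA0 pB0; rewrite /cross_labels Ea Eb /=.
  move=> /(_ erefl erefl erefl erefl); rewrite EA0 EB0 EA1 EB1 !invE ?mulmxE.
  case: (overA) => [[-> ->]|[-> ->]].
    by rewrite inv3 ?unitrV ?U // invrK ?mulrA mulrK ?U.
  by rewrite inv3 ?unitrV ?U // invrK ?mulrA mulVr ?U // mul1r.
Qed.
Lemma region_cross (C : fieldType) D (g : pt D -> 'M[C]_2) :
  is_SL2_coloring g -> wf_diagram D -> forall h k overA j q, (h < height D)%N ->
  stepn D h = Cross k overA -> (j <= size (slice D h))%N ->
  q \in gap_cont (Cross k overA) j -> P g h j = P g h.+1 q.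
Proof.
move=> Hc Hwf h k overA j q Hh Hst Hj.
have := wf_slice Hwf Hh; rewrite Hst /= => Hk.
have Hs' := slice_succ Hh; rewrite Hst /= in Hs'.
have Hsz : size (slice D h.+1) = size (slice D h).
  by rewrite Hs' size_ins ?size_drop; lia.
have HA : forall p, p != k -> p != k.+1 -> (p < size (slice D h))%N ->
    Mt g (h.+1, p) = Mt g (h, p).
  move=> p Hp1 Hp2 Hp; apply: (Mt_cont Hc) => //.
  - by rewrite Hst /= (negbTE Hp1) (negbTE Hp2).
  - by rewrite Hsz.
  - rewrite Hs' nth_ins; last by lia.
    case: ltnP => // Hpk; rewrite (negbTE Hp1) (negbTE Hp2).
    by congr nth; lia.
have HC := cross_pair Hc Hwf Hh Hst.
have Hbase : P g h.+1 k = P g h k.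
  apply: eq_Pm => p Hp; apply: HA; lia.
have Hbase2 : P g h.+1 k.+2 = P g h k.+2 by rewrite /P /= !mulrA HC -!mulrA; congr (_ * _); congr (_ * _).
rewrite /=; case: eqP => // Hjk; rewrite inE => /eqP ->.
case: (ltnP k.+1 j) => Hj2.
  have [m Em] : exists m, j = (m + k.+2)%N by exists (j - k.+2)%N; lia.
  subst j; rewrite /P !Pm_add -/(P g h k.+2) -/(P g h.+1 k.+2) Hbase2.
  congr (_ * _); apply: eq_Pm => p Hp; rewrite HA //; lia.
apply: eq_Pm => p Hp; rewrite HA //; lia.
Qed.

Lemma region_P (C : fieldType) D (g : pt D -> 'M[C]_2) :
  is_SL2_coloring g -> wf_diagram D -> forall h j q, (h < height D)%N ->
  (j <= size (slice D h))%N ->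
  q \in gap_cont (stepn D h) j -> P g h j = P g h.+1 q.
Proof.
move=> Hc Hwf h j q Hh Hj; case E: (stepn D h) => [k o|k o|k].
- exact: region_cross E Hj.
- exact: region_cup E Hj.
- exact: region_cap E Hj.
Qed.
Definition U (C : fieldType) D (g : pt D -> 'M[C]_2) (v : 'cV[C]_2) : gap D -> 'cV[C]_2 :=
  fun r => P g (val r).1 (val r).2 *m v.

Lemma P_unit (C : fieldType) D (g : pt D -> 'M[C]_2) :
  is_SL2_coloring g -> forall h j, P g h j \in unitmx.
Proof. by case=> Hu _ _ h j; apply: Pm_unit => p; apply: Mt_unit. Qed.

Lemma U_shadow (C : fieldType) D (g : pt D -> 'M[C]_2) v :
  is_SL2_coloring g -> wf_diagram D -> v != 0 -> is_shadow g (U g v).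
Proof.
move=> Hc Hwf Hv; have Hu := Hc; case: Hu => Hu _ _; split.
- move=> r; apply/eqP => E; move: Hv.
  by rewrite -(mulKmx (P_unit Hc (val r).1 (val r).2) v) -/(U g v r) E mulmx0 eqxx.
- move=> [[h j] Hr] [[h' q] Hs] /= [h0 [j0 [q0 [Hh Hq [E1 E2] [E3 E4]]]]].
  subst; rewrite /U /=; rewrite (region_P Hc Hwf Hh _ Hq) //.
  by move: Hr; rewrite /gap_ok /= => /andP [].
- move=> [[h p] Hx] [[h1 j1] Hr] [[h2 j2] Hs] /=.
  rewrite /gap_up /gap_down /= -(ggE g (Sub (h, p) Hx)) SubK /U /=.
  case Eo: (orient D (h, p)) => -[-> ->] [-> ->] /=.
    by rewrite /P /= /Mt Eo mulmxA.
  rewrite /P /= /Mt Eo mulmxA; congr (_ *m _).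
  by rewrite -[_ *m _]/(_ * _) mulVKr ?gg_unit.
Qed.

Lemma g00_ok D : gap_ok D (0, 0).
Proof. by rewrite /gap_ok /= !leq0n. Qed.

Definition g00 D : gap D := Sub (0, 0) (g00_ok D).

Lemma shadow_col0 (C : fieldType) D (g : pt D -> 'M[C]_2) u :
  is_shadow g u -> forall h (H : gap_ok D (h, 0)), u (Sub (h, 0) H) = u (g00 D).
Proof.
case=> _ H2 _; elim=> [|h IH] H.
  by congr u; apply: val_inj.
have Hh : (h < height D)%N by move: H; rewrite /gap_ok /= => /andP [].
have H' : gap_ok D (h, 0) by rewrite /gap_ok /= (ltnW Hh).
rewrite -(IH H'); symmetry; apply: H2; rewrite !SubK.
exists h, 0%N, 0%N; split => //.
by case: (stepn D h) => [k o|k o|k] /=; case: k.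
Qed.

Lemma shadow_unique (C : fieldType) D (g : pt D -> 'M[C]_2) u :
  is_SL2_coloring g -> is_shadow g u ->
  forall h j (H : gap_ok D (h, j)), u (Sub (h, j) H) = P g h j *m u (g00 D).
Proof.
move=> Hc Hs; have Hs' := Hs; case: Hs' => _ _ H3 h.
have Hu : forall x, g x \in @SL2 C by case: Hc.
elim=> [|j IH] H.
  by rewrite (shadow_col0 Hs) /P /= mul1mx.
have Hx : pt_ok D (h, j) by move: H; rewrite /gap_ok /pt_ok /=.
have Hj : gap_ok D (h, j) by move: H; rewrite /gap_ok /= => /andP [-> /ltnW ->].
have := H3 (Sub (h, j) Hx).
rewrite -(ggE g (Sub (h, j) Hx)) SubK /gap_up /gap_down /=.
case Eo: (orient D (h, j)).
  move=> /(_ (Sub (h, j) Hj) (Sub (h, j.+1) H)); rewrite !SubK => /(_ erefl erefl) ->.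
  by rewrite IH /P /= /Mt Eo mulmxA.
move=> /(_ (Sub (h, j.+1) H) (Sub (h, j) Hj)); rewrite !SubK => /(_ erefl erefl).
rewrite IH /P /= /Mt Eo => E.
rewrite -[u _](mulKmx (gg_unit Hu (h, j))) -E mulmxA.
by [].
Qed.
Lemma U00 (C : fieldType) D (g : pt D -> 'M[C]_2) v : U g v (g00 D) = v.
Proof. by rewrite /U /= mul1mx. Qed.

Lemma main_gen (C : fieldType) (D : diagram) (g : pt D -> 'M[C]_2) :
  wf_diagram D -> is_SL2_coloring g ->
  (exists u : gap D -> 'cV[C]_2, is_shadow g u) /\
  (exists f : {v : 'cV[C]_2 | v != 0} ->
              {u : gap D -> 'cV[C]_2 | is_shadow g u},
     bijective f).
Proof.
move=> Hwf Hc.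
have H1 : (const_mx 1 : 'cV[C]_2) != 0.
  apply/eqP => /matrixP /(_ 0 0); rewrite !mxE => /eqP; by rewrite oner_eq0.
split; first by exists (U g (const_mx 1)); apply: U_shadow.
pose f := fun v : {v : 'cV[C]_2 | v != 0} =>
  exist (fun u => is_shadow g u) (U g (val v)) (U_shadow Hc Hwf (valP v)).
have Hnz : forall w : {u : gap D -> 'cV[C]_2 | is_shadow g u}, proj1_sig w (g00 D) != 0.
  by move=> w; case: (proj2_sig w).
pose fi := fun w : {u : gap D -> 'cV[C]_2 | is_shadow g u} =>
  (exist (fun v : 'cV[C]_2 => v != 0) (proj1_sig w (g00 D)) (Hnz w)).
exists f; apply: (Bijective (g := fi)).
  by move=> v; apply: val_inj; rewrite /= U00.
move=> [u Hu]; apply: subset_eq_compat => /=.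
apply: functional_extensionality => -[[h j] H].
by rewrite /U /=; symmetry; exact: (shadow_unique Hc Hu H).
Qed.

Theorem lemma2p9 (R : realType) (D : diagram) (g : pt D -> 'M[R[i]]_2) :
  wf_diagram D -> is_SL2_coloring g ->
  (exists u : gap D -> 'cV[R[i]]_2, is_shadow g u) /\
  (exists f : {v : 'cV[R[i]]_2 | v != 0} ->
              {u : gap D -> 'cV[R[i]]_2 | is_shadow g u},
     bijective f).
Proof. exact: main_gen. Qed.
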